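(* Let $\psi:C_Z\to\mathbb{R}$ be an increasing convex functional such that $\lim_{z\to+\infty}\psi(n(Z-z)^+)=\psi(0)$ for every $n\in\mathbb{N}$. Then for every $X\in C_Z$ there exists $\varepsilon>0$ with $\lim_{z\to+\infty}\psi(X+\varepsilon(Z-z)^+)=\psi(X)$.
   Context: Fix integers $J\ge0$, $T\ge1$. $\Omega$ is a non-empty subset of $((0,\infty)\times\mathbb{R}^J)^T$ with the Euclidean metric. $Z:\Omega\to[1,\infty)$ is continuous with $\{\omega\in\Omega:Z(\omega)\le z\}$ compact for every $z\in\mathbb{R}_+$. $C_Z$ is the space of continuous $X:\Omega\to\mathbb{R}$ with $X/Z$ bounded. $\psi$ increasing means $\psi(X)\ge\psi(Y)$ whenever $X\ge Y$. *)

(* Defs.v *)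
From HB Require Import structures.
From mathcomp Require Import all_boot all_order all_algebra.
From mathcomp Require Import all_classical all_reals all_analysis.
Set Implicit Arguments. Unset Strict Implicit. Unset Printing Implicit Defensive.
Import Order.TTheory GRing.Theory Num.Theory.
Import numFieldNormedType.Exports.
Local Open Scope classical_set_scope.
Local Open Scope ring_scope.

(* A point of ((0,oo) x R^J)^T is encoded as a T x (J+1) real matrix whose
   row t is (s_t, x_t) with s_t = w t ord0 > 0. *)
Definition state_pt (R : realType) (J T : nat) := 'M[R]_(T, J.+1).

Definition in_state_space (R : realType) (J T : nat) (w : state_pt R J T) : Prop :=
  forall t : 'I_T, 0 < w t ord0.

(* C_Z: continuous (on Omega) real functions X with X/Z bounded on Omega.
   Functions are given on the ambient space; only values on Omega matter. *)
Definition C_Z (R : realType) (J T : nat) (Omega : set (state_pt R J T))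
  (Z : state_pt R J T -> R) (X : state_pt R J T -> R) : Prop :=
  {within Omega, continuous X} /\
  exists M : R, forall w, Omega w -> `|X w / Z w| <= M.

Definition increasing_on_CZ (R : realType) (J T : nat) (Omega : set (state_pt R J T))
  (Z : state_pt R J T -> R) (psi : (state_pt R J T -> R) -> R) : Prop :=
  forall X Y, C_Z Omega Z X -> C_Z Omega Z Y ->
    (forall w, Omega w -> Y w <= X w) -> psi Y <= psi X.

Definition convex_on_CZ (R : realType) (J T : nat) (Omega : set (state_pt R J T))
  (Z : state_pt R J T -> R) (psi : (state_pt R J T -> R) -> R) : Prop :=
  forall X Y (l : R), C_Z Omega Z X -> C_Z Omega Z Y -> 0 <= l <= 1 ->
    psi (fun w => l * X w + (1 - l) * Y w) <= l * psi X + (1 - l) * psi Y.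

Definition pos_part (R : realType) (x : R) : R := Num.max x 0.

(* Main.v *)
Require Import Defs.
From HB Require Import structures.
From mathcomp Require Import all_boot all_order all_algebra.
From mathcomp Require Import all_classical all_reals all_analysis.
From mathcomp Require Import ring lra.
Import Order.TTheory GRing.Theory Num.Theory.
Import numFieldNormedType.Exports.
Local Open Scope classical_set_scope.
Local Open Scope ring_scope.

Section S.
Variables (R : realType) (J T : nat) (Omega : set (state_pt R J T)) (Z : state_pt R J T -> R).
Hypothesis Z1 : forall w, Omega w -> 1 <= Z w.
Hypothesis Zc : {within Omega, continuous Z}.

Lemma CZ_add X Y : C_Z Omega Z X -> C_Z Omega Z Y -> C_Z Omega Z (fun w => X w + Y w).
Proof.
move=> [cX [M HM]] [cY [N HN]]; split.
  by move=> x; apply: cvgD; [exact: cX|exact: cY].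
exists (M + N) => w Ow; rewrite mulrDl; apply: le_trans (ler_normD _ _) _.
by apply: lerD; [exact: HM|exact: HN].
Qed.

Lemma CZ_scale (c : R) X : C_Z Omega Z X -> C_Z Omega Z (fun w => c * X w).
Proof.
move=> [cX [M HM]]; split.
  by move=> x; apply: cvgMl_tmp; exact: cX.
exists (`|c| * M) => w Ow; rewrite -mulrA normrM.
by apply: ler_wpM2l => //; exact: HM.
Qed.

Lemma CZ_pos (z : R) : C_Z Omega Z (fun w => pos_part (Z w - z)).
Proof.
split.
  move=> x; rewrite /pos_part.
  apply: (@continuous_max _ _ (fun w : subspace Omega => Z w - z) (fun _ => 0)).
    by apply: cvgB; [exact: Zc| exact: cvg_cst].
  exact: cvg_cst.
exists (1 + `|z|) => w Ow.
have Zp : 0 < Z w by apply: (lt_le_trans ltr01 (Z1 w Ow)).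
have h0 : `|pos_part (Z w - z)| <= (1 + `|z|) * Z w.
  have : 1 * `|z| <= Z w * `|z| by apply: ler_wpM2r => //; exact: Z1 w Ow.
  rewrite mul1r => h; rewrite /pos_part.
  case: (leP (Z w - z) 0) => hh.
    by rewrite normr0 mulr_ge0 // ?addr_ge0 // ltW.
  rewrite gtr0_norm //.
  have := ler_norm (-z); rewrite normrN => h2.
  rewrite mulrDl mul1r mulrC; lra.
rewrite normrM (gtr0_norm (x:=(Z w)^-1)) ?invr_gt0 //.
by rewrite -ler_pdivlMr ?invr_gt0 // invrK.
Qed.
End S.

Theorem lemmaA2 (R : realType) (J T : nat) (Omega : set (state_pt R J T))
  (Z : state_pt R J T -> R) (psi : (state_pt R J T -> R) -> R) :
  (1 <= T)%N ->
  Omega !=set0 ->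
  (forall w, Omega w -> in_state_space w) ->
  {within Omega, continuous Z} ->
  (forall w, Omega w -> 1 <= Z w) ->
  (forall z : R, 0 <= z -> compact [set w | Omega w /\ Z w <= z]) ->
  increasing_on_CZ Omega Z psi ->
  convex_on_CZ Omega Z psi ->
  (forall n : nat,
     (fun z : R => psi (fun w => n%:R * pos_part (Z w - z))) @ +oo
       --> psi (fun _ => 0)) ->
  forall X, C_Z Omega Z X ->
  exists2 eps : R, 0 < eps &
    (fun z : R => psi (fun w => X w + eps * pos_part (Z w - z))) @ +oo
      --> psi X.
Proof.
move=> _ _ _ Zc Z1 _ Hinc Hcvx H X CX.
exists 1 => //.
apply/cvgrPdist_lt => d d0.
set a := psi X.
set b := psi (fun w => 2 * X w).
set c := psi (fun _ => 0).
set K := b + c + 1 - 2 * a.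
set k := (Num.truncn (K / d)).+1.
have k1 : (1 <= k)%N by [].
have kpos : (0 : R) < k%:R by rewrite ltr0n.
have Kk : K < d * (k.+1)%:R.
  rewrite mulrC -ltr_pdivrMr //.
  apply: lt_le_trans (truncnS_gt _) _.
  by rewrite ler_nat /k.
have hn := (cvgrPdist_lt _ _).1 (H k.+1) 1 ltr01.
suff Hz : forall z, `|c - psi (fun w => k.+1%:R * pos_part (Z w - z))| < 1 ->
   `|a - psi (fun w => X w + 1 * pos_part (Z w - z))| < d.
  near=> z; apply: Hz; near: z; exact: hn.
move=> z hz.
set P := fun w => pos_part (Z w - z).
have CP : C_Z Omega Z P by exact: CZ_pos.
have C2X : C_Z Omega Z (fun w => 2 * X w) by exact: CZ_scale.
set Y := fun w => X w + X w / k%:R.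
have CY : C_Z Omega Z Y.
  apply: CZ_add => //.
  under eq_fun => w do rewrite mulrC.
  exact: CZ_scale.
set u := psi Y.
set q := psi (fun w => k.+1%:R * P w).
set v := psi (fun w => X w + 1 * P w).
have c1 : u <= (1 - k%:R^-1) * a + (1 - (1 - k%:R^-1)) * b.
  have -> : u = psi (fun w => (1 - k%:R^-1) * X w + (1 - (1 - k%:R^-1)) * (2 * X w)).
    rewrite /u /Y; congr psi; apply/funext => w; field.
    by rewrite lt0r_neq0.
  apply: Hcvx => //.
  have i1 : k%:R^-1 <= 1 :> R by rewrite invr_le1 ?ler1n // unitfE lt0r_neq0.
  have i0 : 0 <= k%:R^-1 :> R by rewrite invr_ge0 ler0n.
  apply/andP; split; lra.
pose l2 : R := k%:R / k.+1%:R.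
have kSpos : (0 : R) < k.+1%:R by rewrite ltr0n.
have c2 : v <= l2 * u + (1 - l2) * q.
  have -> : v = psi (fun w => l2 * Y w + (1 - l2) * (k.+1%:R * P w)).
    rewrite /v /Y /l2; congr psi; apply/funext => w.
    rewrite -natr1; field.
    by rewrite natr1 lt0r_neq0 //= lt0r_neq0.
  apply: Hcvx => //; first exact: CZ_scale.
  apply/andP; split; first by rewrite divr_ge0 ?ler0n.
  by rewrite ler_pdivrMr // mul1r ler_nat.
have c3 : q <= c + 1.
  move: hz; rewrite -/q -/c => hz.
  have := ler_norm (q - c); rewrite -normrN opprB; lra.
have c4 : a <= v.
  apply: Hinc => //; first by apply: CZ_add => //; exact: CZ_scale.
  move=> w Ow; rewrite mul1r lerDl /P /pos_part le_max lexx orbT //.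
pose r : R := (k.+1%:R)^-1.
have r0 : 0 <= r by rewrite invr_ge0 ler0n.
have e1 : l2 * ((1 - k%:R^-1) * a + (1 - (1 - k%:R^-1)) * b) = (1 - 2 * r) * a + r * b.
  rewrite /l2 /r -natr1; field.
  by rewrite natr1 lt0r_neq0 //= lt0r_neq0.
have e2 : 1 - l2 = r.
  rewrite /l2 /r -natr1; field.
  by rewrite natr1 lt0r_neq0.
have l20 : 0 <= l2 by rewrite divr_ge0 ?ler0n.
have c5 : l2 * u <= (1 - 2 * r) * a + r * b by rewrite -e1 ler_wpM2l.
have c6 : r * q <= r * (c + 1) by rewrite ler_wpM2l.
have c7 : r * K < d.
  by rewrite /r mulrC ltr_pdivrMr.
rewrite e2 in c2.
have : v - a <= r * K by rewrite /K; lra.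
rewrite ler0_norm ?subr_le0 //; lra.
Unshelve. all: by end_near. Qed.
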